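(* Let $F\colon\mathbb{A}\to\mathbb{B}$ be a double functor between double categories. Then $F$ is a double fibration if and only if both 2-functors $\mathbf{H}F\colon\mathbf{H}\mathbb{A}\to\mathbf{H}\mathbb{B}$ and $\mathcal{V}F\colon\mathcal{V}\mathbb{A}\to\mathcal{V}\mathbb{B}$ are Lack fibrations.
   Context: A double category has objects, horizontal morphisms, vertical morphisms and squares; a square $\alpha\colon(u\,{}^{a}_{b}\,v)$ has top horizontal boundary $a\colon A\to B$, bottom horizontal boundary $b\colon A'\to B'$, left vertical boundary $u\colon A\to A'$ and right vertical boundary $v\colon B\to B'$; compositions are strictly associative and unital and satisfy interchange; $e_A$ is the vertical identity on $A$; a square is vertically invertible if it is invertible for vertical composition. $\mathbf{H}\mathbb{A}$ is the underlying horizontal 2-category of $\mathbb{A}$: objects and horizontal morphisms of $\mathbb{A}$, and as 2-cells $a\Rightarrow b$ the squares $(e_A\,{}^{a}_{b}\,e_B)$. $\mathcal{V}\mathbb{A}$ is the 2-category whose objects are vertical morphisms $u\colon A\to A'$ of $\mathbb{A}$, whose morphisms $u\to v$ are squares with left boundary $u$ and right boundary $v$ (composed horizontally), and whose 2-cells from $\alpha\colon(u\,{}^{a}_{b}\,v)$ to $\beta\colon(u\,{}^{c}_{d}\,v)$ are pairs of squares $\sigma_0\colon(e_A\,{}^{a}_{c}\,e_B)$, $\sigma_1\colon(e_{A'}\,{}^{b}_{d}\,e_{B'})$ such that $\sigma_0$ vertically composed on top of $\beta$ equals $\alpha$ vertically composed on top of $\sigma_1$. A horizontal morphism is a horizontal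 equivalence if it is an equivalence in $\mathbf{H}\mathbb{A}$; a square is weakly horizontally invertible if it is an equivalence in $\mathcal{V}\mathbb{A}$. A 2-functor $G\colon\mathcal{A}\to\mathcal{B}$ is a Lack fibration if (f1) for every equivalence $b\colon B\to GC$ in $\mathcal{B}$ there is an equivalence $a\colon A\to C$ in $\mathcal{A}$ with $Ga=b$; (f2) for every morphism $c\colon A\to C$ in $\mathcal{A}$ and invertible 2-cell $\beta\colon b\cong Gc$ in $\mathcal{B}$ there is an invertible 2-cell $\alpha\colon a\cong c$ in $\mathcal{A}$ with $G\alpha=\beta$. A double functor $F\colon\mathbb{A}\to\mathbb{B}$ is a double fibration if (df1) for every horizontal equivalence $b\colon B\to FC$ in $\mathbb{B}$ there is a horizontal equivalence $a\colon A\to C$ in $\mathbb{A}$ with $Fa=b$; (df2) for every horizontal morphism $c\colon A\to C$ in $\mathbb{A}$ and every vertically invertible square $\beta\colon(e_{FA}\,{}^{b}_{Fc}\,e_{FC})$ in $\mathbb{B}$ there is a vertically invertible square $\alpha\colon(e_A\,{}^{a}_{c}\,e_C)$ in $\mathbb{A}$ with $F\alpha=\beta$; (df3) for every vertical morphism $u'\colon C\to C'$ in $\mathbb{A}$ and every weakly horizontally invertible square $\beta$ in $\mathbb{B}$ with right boundary $Fu'$ (and some left boundary $v\colon B\to B'$), there is a weakly horizontally invertible square $\alpha$ in $\mathbb{A}$ with right boundary $u'$ and $F\alpha=\beta$. *)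

(* Defs.v *)
From Stdlib Require Import ProofIrrelevance.

Set Implicit Arguments.
Unset Strict Implicit.

(* Strict double categories.  Composition is written in diagrammatic order:  *)
(* [hcomp f g] is "f then g".  Composition operations are total functions;   *)
(* all axioms only constrain composable pairs, so values on non-composable    *)
(* pairs are irrelevant junk (every double category in the usual sense is     *)
(* represented, and all notions below only use composable pairs).            *)

Record DoubleCat : Type := {
  ob : Type;
  hom : Type; hsrc : hom -> ob; htgt : hom -> ob;
  hid : ob -> hom; hcomp : hom -> hom -> hom;
  ver : Type; vsrc : ver -> ob; vtgt : ver -> ob;
  vid : ob -> ver; vcomp : ver -> ver -> ver;
  sq : Type; stop : sq -> hom; sbot : sq -> hom; slft : sq -> ver; srgt : sq -> ver;
  sq_hid : ver -> sq;
  sq_vid : hom -> sq;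
  sq_hcomp : sq -> sq -> sq;
  sq_vcomp : sq -> sq -> sq;  (* vertical composition: sq_vcomp a b = a on top of b *)

  hsrc_hid : forall X, hsrc (hid X) = X;
  htgt_hid : forall X, htgt (hid X) = X;
  hsrc_hcomp : forall f g, htgt f = hsrc g -> hsrc (hcomp f g) = hsrc f;
  htgt_hcomp : forall f g, htgt f = hsrc g -> htgt (hcomp f g) = htgt g;
  hcomp_id_l : forall f, hcomp (hid (hsrc f)) f = f;
  hcomp_id_r : forall f, hcomp f (hid (htgt f)) = f;
  hcomp_assoc : forall f g h, htgt f = hsrc g -> htgt g = hsrc h ->
      hcomp (hcomp f g) h = hcomp f (hcomp g h);
  vsrc_vid : forall X, vsrc (vid X) = X;
  vtgt_vid : forall X, vtgt (vid X) = X;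
  vsrc_vcomp : forall u v, vtgt u = vsrc v -> vsrc (vcomp u v) = vsrc u;
  vtgt_vcomp : forall u v, vtgt u = vsrc v -> vtgt (vcomp u v) = vtgt v;
  vcomp_id_l : forall u, vcomp (vid (vsrc u)) u = u;
  vcomp_id_r : forall u, vcomp u (vid (vtgt u)) = u;
  vcomp_assoc : forall u v w, vtgt u = vsrc v -> vtgt v = vsrc w ->
      vcomp (vcomp u v) w = vcomp u (vcomp v w);
  stop_hsrc : forall a, hsrc (stop a) = vsrc (slft a);
  stop_htgt : forall a, htgt (stop a) = vsrc (srgt a);
  sbot_hsrc : forall a, hsrc (sbot a) = vtgt (slft a);
  sbot_htgt : forall a, htgt (sbot a) = vtgt (srgt a);
  sq_hid_top : forall u, stop (sq_hid u) = hid (vsrc u);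
  sq_hid_bot : forall u, sbot (sq_hid u) = hid (vtgt u);
  sq_hid_lft : forall u, slft (sq_hid u) = u;
  sq_hid_rgt : forall u, srgt (sq_hid u) = u;
  sq_vid_top : forall f, stop (sq_vid f) = f;
  sq_vid_bot : forall f, sbot (sq_vid f) = f;
  sq_vid_lft : forall f, slft (sq_vid f) = vid (hsrc f);
  sq_vid_rgt : forall f, srgt (sq_vid f) = vid (htgt f);
  sq_hcomp_top : forall a b, srgt a = slft b -> stop (sq_hcomp a b) = hcomp (stop a) (stop b);
  sq_hcomp_bot : forall a b, srgt a = slft b -> sbot (sq_hcomp a b) = hcomp (sbot a) (sbot b);
  sq_hcomp_lft : forall a b, srgt a = slft b -> slft (sq_hcomp a b) = slft a;
  sq_hcomp_rgt : forall a b, srgt a = slft b -> srgt (sq_hcomp a b) = srgt b;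
  sq_vcomp_top : forall a b, sbot a = stop b -> stop (sq_vcomp a b) = stop a;
  sq_vcomp_bot : forall a b, sbot a = stop b -> sbot (sq_vcomp a b) = sbot b;
  sq_vcomp_lft : forall a b, sbot a = stop b -> slft (sq_vcomp a b) = vcomp (slft a) (slft b);
  sq_vcomp_rgt : forall a b, sbot a = stop b -> srgt (sq_vcomp a b) = vcomp (srgt a) (srgt b);
  sq_hcomp_id_l : forall a, sq_hcomp (sq_hid (slft a)) a = a;
  sq_hcomp_id_r : forall a, sq_hcomp a (sq_hid (srgt a)) = a;
  sq_vcomp_id_l : forall a, sq_vcomp (sq_vid (stop a)) a = a;
  sq_vcomp_id_r : forall a, sq_vcomp a (sq_vid (sbot a)) = a;
  sq_hcomp_assoc : forall a b c, srgt a = slft b -> srgt b = slft c ->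
      sq_hcomp (sq_hcomp a b) c = sq_hcomp a (sq_hcomp b c);
  sq_vcomp_assoc : forall a b c, sbot a = stop b -> sbot b = stop c ->
      sq_vcomp (sq_vcomp a b) c = sq_vcomp a (sq_vcomp b c);
  sq_interchange : forall a b c d, srgt a = slft b -> srgt c = slft d ->
      sbot a = stop c -> sbot b = stop d ->
      sq_vcomp (sq_hcomp a b) (sq_hcomp c d) = sq_hcomp (sq_vcomp a c) (sq_vcomp b d);
  sq_vid_hcomp : forall f g, htgt f = hsrc g ->
      sq_vid (hcomp f g) = sq_hcomp (sq_vid f) (sq_vid g);
  sq_hid_vcomp : forall u v, vtgt u = vsrc v ->
      sq_hid (vcomp u v) = sq_vcomp (sq_hid u) (sq_hid v);
  sq_vid_hid : forall X, sq_vid (hid X) = sq_hid (vid X)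
}.

Arguments hsrc {_} _. Arguments htgt {_} _. Arguments hid {_} _. Arguments hcomp {_} _ _.
Arguments vsrc {_} _. Arguments vtgt {_} _. Arguments vid {_} _. Arguments vcomp {_} _ _.
Arguments stop {_} _. Arguments sbot {_} _. Arguments slft {_} _. Arguments srgt {_} _.
Arguments sq_hid {_} _. Arguments sq_vid {_} _.
Arguments sq_hcomp {_} _ _. Arguments sq_vcomp {_} _ _.

Record DoubleFunctor (A B : DoubleCat) : Type := {
  Fob : ob A -> ob B;
  Fhom : hom A -> hom B;
  Fver : ver A -> ver B;
  Fsq : sq A -> sq B;
  F_hsrc : forall f, hsrc (Fhom f) = Fob (hsrc f);
  F_htgt : forall f, htgt (Fhom f) = Fob (htgt f);
  F_vsrc : forall u, vsrc (Fver u) = Fob (vsrc u);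
  F_vtgt : forall u, vtgt (Fver u) = Fob (vtgt u);
  F_stop : forall a, stop (Fsq a) = Fhom (stop a);
  F_sbot : forall a, sbot (Fsq a) = Fhom (sbot a);
  F_slft : forall a, slft (Fsq a) = Fver (slft a);
  F_srgt : forall a, srgt (Fsq a) = Fver (srgt a);
  F_hid : forall X, Fhom (hid X) = hid (Fob X);
  F_vid : forall X, Fver (vid X) = vid (Fob X);
  F_sq_hid : forall u, Fsq (sq_hid u) = sq_hid (Fver u);
  F_sq_vid : forall f, Fsq (sq_vid f) = sq_vid (Fhom f);
  F_hcomp : forall f g, htgt f = hsrc g -> Fhom (hcomp f g) = hcomp (Fhom f) (Fhom g);
  F_vcomp : forall u v, vtgt u = vsrc v -> Fver (vcomp u v) = vcomp (Fver u) (Fver v);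
  F_sq_hcomp : forall a b, srgt a = slft b -> Fsq (sq_hcomp a b) = sq_hcomp (Fsq a) (Fsq b);
  F_sq_vcomp : forall a b, sbot a = stop b -> Fsq (sq_vcomp a b) = sq_vcomp (Fsq a) (Fsq b)
}.

Arguments Fob {_ _} _ _. Arguments Fhom {_ _} _ _. Arguments Fver {_ _} _ _.
Arguments Fsq {_ _} _ _.

(* 2-categories (the data used by the notions of equivalence, invertible     *)
(* 2-cell and Lack fibration).  1-cell composition diagrammatic; vertical     *)
(* composition of 2-cells only for composable pairs.                          *)

Record TwoCat : Type := {
  tob : Type;
  tmor : Type; tsrc : tmor -> tob; ttgt : tmor -> tob;
  tidm : tob -> tmor; tcomp : tmor -> tmor -> tmor;
  tcell : Type; csrc : tcell -> tmor; ctgt : tcell -> tmor;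
  cid : tmor -> tcell;
  ccomp : forall s t : tcell, ctgt s = csrc t -> tcell
}.

Arguments tsrc {_} _. Arguments ttgt {_} _. Arguments tidm {_} _. Arguments tcomp {_} _ _.
Arguments csrc {_} _. Arguments ctgt {_} _. Arguments cid {_} _. Arguments ccomp {_} _ _ _.

Record TwoFunctor (C D : TwoCat) : Type := {
  G0 : tob C -> tob D;
  G1 : tmor C -> tmor D;
  G2 : tcell C -> tcell D
}.
Arguments G0 {_ _} _ _. Arguments G1 {_ _} _ _. Arguments G2 {_ _} _ _.

Definition invertible2 (C : TwoCat) (s : tcell C) : Prop :=
  exists t : tcell C, exists (h1 : ctgt s = csrc t) (h2 : ctgt t = csrc s),
    ccomp s t h1 = cid (csrc s) /\ ccomp t s h2 = cid (ctgt s).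

Definition is_equivalence (C : TwoCat) (f : tmor C) : Prop :=
  exists g : tmor C, tsrc g = ttgt f /\ ttgt g = tsrc f /\
    (exists eta : tcell C, invertible2 eta /\ csrc eta = tidm (tsrc f) /\ ctgt eta = tcomp f g) /\
    (exists eps : tcell C, invertible2 eps /\ csrc eps = tcomp g f /\ ctgt eps = tidm (ttgt f)).

Definition lack_fibration (C D : TwoCat) (G : TwoFunctor C D) : Prop :=
  (forall (b : tmor D) (Cc : tob C), is_equivalence b -> ttgt b = G0 G Cc ->
     exists a : tmor C, is_equivalence a /\ ttgt a = Cc /\ G1 G a = b) /\
  (forall (c : tmor C) (beta : tcell D), invertible2 beta -> ctgt beta = G1 G c ->
     exists alpha : tcell C, invertible2 alpha /\ ctgt alpha = c /\ G2 G alpha = beta).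

Section HorizontalTwoCat.
Variable D : DoubleCat.

Definition Hcell : Type :=
  { a : sq D | slft a = vid (hsrc (stop a)) /\ srgt a = vid (htgt (stop a)) }.

Lemma vid_vid (X : ob D) : vcomp (vid X) (vid X) = vid X.
Proof.
  pose proof (@vcomp_id_l D (vid X)) as H. rewrite (@vsrc_vid D X) in H. exact H.
Qed.

Lemma Hcell_vid (f : hom D) :
  slft (sq_vid f) = vid (hsrc (stop (sq_vid f))) /\
  srgt (sq_vid f) = vid (htgt (stop (sq_vid f))).
Proof.
  rewrite (@sq_vid_top D f). split; [apply sq_vid_lft | apply sq_vid_rgt].
Qed.

Lemma Hcell_comp (s t : Hcell) (h : sbot (proj1_sig s) = stop (proj1_sig t)) :
  slft (sq_vcomp (proj1_sig s) (proj1_sig t)) = vid (hsrc (stop (sq_vcomp (proj1_sig s) (proj1_sig t)))) /\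
  srgt (sq_vcomp (proj1_sig s) (proj1_sig t)) = vid (htgt (stop (sq_vcomp (proj1_sig s) (proj1_sig t)))).
Proof.
  destruct s as [s [Hs1 Hs2]]; destruct t as [t [Ht1 Ht2]]; simpl in *.
  rewrite (@sq_vcomp_lft D s t h), (@sq_vcomp_rgt D s t h), (@sq_vcomp_top D s t h).
  rewrite Hs1, Hs2, Ht1, Ht2.
  assert (E1 : hsrc (stop t) = hsrc (stop s)).
  { rewrite <- h, (@sbot_hsrc D s), Hs1, (@vtgt_vid D). reflexivity. }
  assert (E2 : htgt (stop t) = htgt (stop s)).
  { rewrite <- h, (@sbot_htgt D s), Hs2, (@vtgt_vid D). reflexivity. }
  rewrite E1, E2, !vid_vid. split; reflexivity.
Qed.

Definition Hccomp (s t : Hcell) (h : sbot (proj1_sig s) = stop (proj1_sig t)) : Hcell :=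
  exist _ (sq_vcomp (proj1_sig s) (proj1_sig t)) (@Hcell_comp s t h).

Definition HTwoCat : TwoCat := {|
  tob := ob D; tmor := hom D; tsrc := @hsrc D; ttgt := @htgt D;
  tidm := @hid D; tcomp := @hcomp D;
  tcell := Hcell;
  csrc := fun s => stop (proj1_sig s);
  ctgt := fun s => sbot (proj1_sig s);
  cid := fun f => exist _ (sq_vid f) (Hcell_vid f);
  ccomp := Hccomp
|}.

End HorizontalTwoCat.

Section VerticalTwoCat.
Variable D : DoubleCat.

Record VCell : Type := {
  vc_src : sq D; vc_tgt : sq D; vc_s0 : sq D; vc_s1 : sq D;
  vc_lft : slft vc_src = slft vc_tgt;
  vc_rgt : srgt vc_src = srgt vc_tgt;
  vc_s0_top : stop vc_s0 = stop vc_src;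
  vc_s0_bot : sbot vc_s0 = stop vc_tgt;
  vc_s0_lft : slft vc_s0 = vid (hsrc (stop vc_src));
  vc_s0_rgt : srgt vc_s0 = vid (htgt (stop vc_src));
  vc_s1_top : stop vc_s1 = sbot vc_src;
  vc_s1_bot : sbot vc_s1 = sbot vc_tgt;
  vc_s1_lft : slft vc_s1 = vid (hsrc (sbot vc_src));
  vc_s1_rgt : srgt vc_s1 = vid (htgt (sbot vc_src));
  vc_eq : sq_vcomp vc_s0 vc_tgt = sq_vcomp vc_src vc_s1
}.

Definition Vcid (a : sq D) : VCell.
Proof.
  refine {| vc_src := a; vc_tgt := a; vc_s0 := sq_vid (stop a); vc_s1 := sq_vid (sbot a) |}.
  all: try reflexivity.
  all: try apply sq_vid_top; try apply sq_vid_bot; try apply sq_vid_lft; try apply sq_vid_rgt.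
  rewrite (@sq_vcomp_id_l D a), (@sq_vcomp_id_r D a). reflexivity.
Defined.

Definition Vccomp (s t : VCell) (h : vc_tgt s = vc_src t) : VCell.
Proof.
  destruct s as [as_ bs s0 s1 Hl Hr H0t H0b H0l H0r H1t H1b H1l H1r Heq];
  destruct t as [at_ bt t0 t1 Kl Kr K0t K0b K0l K0r K1t K1b K1l K1r Keq]; simpl in h.
  subst at_.
  assert (k0 : sbot s0 = stop t0) by congruence.
  assert (k1 : sbot s1 = stop t1) by congruence.
  assert (E0 : hsrc (stop bs) = hsrc (stop as_)).
  { rewrite <- H0b, (@sbot_hsrc D), H0l, (@vtgt_vid D). reflexivity. }
  assert (E0' : htgt (stop bs) = htgt (stop as_)).
  { rewrite <- H0b, (@sbot_htgt D), H0r, (@vtgt_vid D). reflexivity. }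
  assert (E1 : hsrc (sbot bs) = hsrc (sbot as_)).
  { rewrite <- H1b, (@sbot_hsrc D), H1l, (@vtgt_vid D). reflexivity. }
  assert (E1' : htgt (sbot bs) = htgt (sbot as_)).
  { rewrite <- H1b, (@sbot_htgt D), H1r, (@vtgt_vid D). reflexivity. }
  refine {| vc_src := as_; vc_tgt := bt; vc_s0 := sq_vcomp s0 t0; vc_s1 := sq_vcomp s1 t1 |}.
  - congruence.
  - congruence.
  - rewrite (@sq_vcomp_top D _ _ k0). exact H0t.
  - rewrite (@sq_vcomp_bot D _ _ k0). exact K0b.
  - rewrite (@sq_vcomp_lft D _ _ k0), H0l, K0l, E0, vid_vid. reflexivity.
  - rewrite (@sq_vcomp_rgt D _ _ k0), H0r, K0r, E0', vid_vid. reflexivity.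
  - rewrite (@sq_vcomp_top D _ _ k1). exact H1t.
  - rewrite (@sq_vcomp_bot D _ _ k1). exact K1b.
  - rewrite (@sq_vcomp_lft D _ _ k1), H1l, K1l, E1, vid_vid. reflexivity.
  - rewrite (@sq_vcomp_rgt D _ _ k1), H1r, K1r, E1', vid_vid. reflexivity.
  - rewrite (@sq_vcomp_assoc D _ _ _ k0 K0b), Keq.
    rewrite <- (@sq_vcomp_assoc D _ _ _ H0b).
    + rewrite Heq, (@sq_vcomp_assoc D _ _ _ (eq_sym H1t)). reflexivity.
      congruence.
    + congruence.
Defined.

Definition VTwoCat : TwoCat := {|
  tob := ver D; tmor := sq D; tsrc := @slft D; ttgt := @srgt D;
  tidm := @sq_hid D; tcomp := @sq_hcomp D;
  tcell := VCell; csrc := vc_src; ctgt := vc_tgt;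
  cid := Vcid; ccomp := Vccomp
|}.

End VerticalTwoCat.

Section InducedTwoFunctors.
Variables (A B : DoubleCat) (F : DoubleFunctor A B).

Lemma HF_cell (s : Hcell A) :
  slft (Fsq F (proj1_sig s)) = vid (hsrc (stop (Fsq F (proj1_sig s)))) /\
  srgt (Fsq F (proj1_sig s)) = vid (htgt (stop (Fsq F (proj1_sig s)))).
Proof.
  destruct s as [s [H1 H2]]; simpl.
  rewrite (F_slft F), (F_srgt F), (F_stop F), (F_hsrc F), (F_htgt F), H1, H2, !(F_vid F).
  split; reflexivity.
Qed.

Definition HF : TwoFunctor (HTwoCat A) (HTwoCat B) :=
  @Build_TwoFunctor (HTwoCat A) (HTwoCat B) (Fob F) (Fhom F)
    (fun s : Hcell A => exist _ (Fsq F (proj1_sig s)) (HF_cell s) : Hcell B).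

Definition VF_cell (s : VCell A) : VCell B.
Proof.
  destruct s as [a b s0 s1 Hl Hr H0t H0b H0l H0r H1t H1b H1l H1r Heq].
  refine {| vc_src := Fsq F a; vc_tgt := Fsq F b; vc_s0 := Fsq F s0; vc_s1 := Fsq F s1 |}.
  - rewrite !(F_slft F), Hl. reflexivity.
  - rewrite !(F_srgt F), Hr. reflexivity.
  - rewrite !(F_stop F), H0t. reflexivity.
  - rewrite (F_sbot F), (F_stop F), H0b. reflexivity.
  - rewrite (F_slft F), (F_stop F), (F_hsrc F), H0l, (F_vid F). reflexivity.
  - rewrite (F_srgt F), (F_stop F), (F_htgt F), H0r, (F_vid F). reflexivity.
  - rewrite (F_stop F), (F_sbot F), H1t. reflexivity.
  - rewrite !(F_sbot F), H1b. reflexivity.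
  - rewrite (F_slft F), (F_sbot F), (F_hsrc F), H1l, (F_vid F). reflexivity.
  - rewrite (F_srgt F), (F_sbot F), (F_htgt F), H1r, (F_vid F). reflexivity.
  - rewrite <- (F_sq_vcomp F H0b), <- (F_sq_vcomp F (eq_sym H1t)), Heq. reflexivity.
Defined.

Definition VF : TwoFunctor (VTwoCat A) (VTwoCat B) :=
  @Build_TwoFunctor (VTwoCat A) (VTwoCat B) (Fver F) (Fsq F) VF_cell.

End InducedTwoFunctors.

Definition horizontal_equivalence (D : DoubleCat) (f : hom D) : Prop :=
  @is_equivalence (HTwoCat D) f.

Definition vertically_invertible (D : DoubleCat) (a : sq D) : Prop :=
  exists b : sq D, sbot a = stop b /\ sbot b = stop a /\
    sq_vcomp a b = sq_vid (stop a) /\ sq_vcomp b a = sq_vid (sbot a).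

Definition weakly_horizontally_invertible (D : DoubleCat) (a : sq D) : Prop :=
  @is_equivalence (VTwoCat D) a.

Definition double_fibration (A B : DoubleCat) (F : DoubleFunctor A B) : Prop :=
  (* (df1) *)
  (forall (b : hom B) (C : ob A), horizontal_equivalence b -> htgt b = Fob F C ->
     exists a : hom A, horizontal_equivalence a /\ htgt a = C /\ Fhom F a = b) /\
  (* (df2) *)
  (forall (c : hom A) (beta : sq B), vertically_invertible beta ->
     slft beta = vid (Fob F (hsrc c)) -> srgt beta = vid (Fob F (htgt c)) ->
     sbot beta = Fhom F c ->
     exists alpha : sq A, vertically_invertible alpha /\
       slft alpha = vid (hsrc c) /\ srgt alpha = vid (htgt c) /\ sbot alpha = c /\
       Fsq F alpha = beta) /\
  (* (df3) *)
  (forall (u' : ver A) (beta : sq B), weakly_horizontally_invertible beta ->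
     srgt beta = Fver F u' ->
     exists alpha : sq A, weakly_horizontally_invertible alpha /\ srgt alpha = u' /\
       Fsq F alpha = beta).

(* Main.v *)
Require Import Defs.
From Stdlib Require Import ProofIrrelevance.

Section Gen.
Variable D : DoubleCat.

Lemma VCell_eq (s t : VCell D) : vc_src s = vc_src t -> vc_tgt s = vc_tgt t ->
  vc_s0 s = vc_s0 t -> vc_s1 s = vc_s1 t -> s = t.
Proof.
  destruct s, t; simpl; intros; subst; f_equal; apply proof_irrelevance.
Qed.

Lemma Hcell_eq (s t : Hcell D) : proj1_sig s = proj1_sig t -> s = t.
Proof.
  destruct s as [s p], t as [t q]; simpl; intros; subst; f_equal; apply proof_irrelevance.
Qed.

Lemma Vccomp_src (s t : VCell D) (h : vc_tgt s = vc_src t) : vc_src (Vccomp h) = vc_src s.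
Proof. destruct s, t; simpl in *; subst; reflexivity. Qed.
Lemma Vccomp_tgt (s t : VCell D) (h : vc_tgt s = vc_src t) : vc_tgt (Vccomp h) = vc_tgt t.
Proof. destruct s, t; simpl in *; subst; reflexivity. Qed.
Lemma Vccomp_s0 (s t : VCell D) (h : vc_tgt s = vc_src t) :
  vc_s0 (Vccomp h) = sq_vcomp (vc_s0 s) (vc_s0 t).
Proof. destruct s, t; simpl in *; subst; reflexivity. Qed.
Lemma Vccomp_s1 (s t : VCell D) (h : vc_tgt s = vc_src t) :
  vc_s1 (Vccomp h) = sq_vcomp (vc_s1 s) (vc_s1 t).
Proof. destruct s, t; simpl in *; subst; reflexivity. Qed.

Lemma inv_sides (a b : sq D) : sbot a = stop b -> sbot b = stop a ->
  sq_vcomp a b = sq_vid (stop a) ->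
  slft a = vid (hsrc (stop a)) -> srgt a = vid (htgt (stop a)) ->
  slft b = vid (hsrc (stop b)) /\ srgt b = vid (htgt (stop b)).
Proof.
  intros h1 h2 e l r.
  assert (El : vcomp (slft a) (slft b) = vid (hsrc (stop a))).
  { rewrite <- (sq_vcomp_lft h1), e. apply sq_vid_lft. }
  assert (Er : vcomp (srgt a) (srgt b) = vid (htgt (stop a))).
  { rewrite <- (sq_vcomp_rgt h1), e. apply sq_vid_rgt. }
  assert (X1 : hsrc (stop b) = hsrc (stop a)).
  { rewrite <- h1, sbot_hsrc, l, vtgt_vid. reflexivity. }
  assert (X2 : htgt (stop b) = htgt (stop a)).
  { rewrite <- h1, sbot_htgt, r, vtgt_vid. reflexivity. }
  assert (Y1 : vsrc (slft b) = hsrc (stop a)).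
  { rewrite <- stop_hsrc. exact X1. }
  assert (Y2 : vsrc (srgt b) = htgt (stop a)).
  { rewrite <- stop_htgt. exact X2. }
  rewrite X1, X2. split.
  - rewrite l, <- Y1, vcomp_id_l in El. rewrite <- Y1. exact El.
  - rewrite r, <- Y2, vcomp_id_l in Er. rewrite <- Y2. exact Er.
Qed.

Lemma H_inv_to_vi (s : Hcell D) : @invertible2 (HTwoCat D) s -> vertically_invertible (proj1_sig s).
Proof.
  intros [t [h1 [h2 [e1 e2]]]].
  exists (proj1_sig t). simpl in h1, h2.
  apply (f_equal (@proj1_sig _ _)) in e1. apply (f_equal (@proj1_sig _ _)) in e2.
  simpl in e1, e2. auto.
Qed.

Lemma H_vi_to_inv (s : Hcell D) : vertically_invertible (proj1_sig s) -> @invertible2 (HTwoCat D) s.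
Proof.
  destruct s as [a [l r]]; simpl. intros [b [h1 [h2 [e1 e2]]]].
  destruct (inv_sides a b h1 h2 e1 l r) as [l' r'].
  exists (exist _ b (conj l' r')). simpl. exists h1, h2. split; apply Hcell_eq; simpl.
  - exact e1.
  - rewrite e2, h1. reflexivity.
Qed.

End Gen.
Arguments H_inv_to_vi {D s}. Arguments H_vi_to_inv {D s}. Arguments Hcell_eq {D s t}.
Arguments VCell_eq {D s t}. Arguments inv_sides {D a b}.
Arguments Vccomp_src {D s t}. Arguments Vccomp_tgt {D s t}.
Arguments Vccomp_s0 {D s t}. Arguments Vccomp_s1 {D s t}.

Lemma side_l (D : DoubleCat) (a : sq D) X : slft a = vid X -> hsrc (stop a) = X /\ hsrc (sbot a) = X.
Proof. intro l. rewrite stop_hsrc, sbot_hsrc, l, vsrc_vid, vtgt_vid. auto. Qed.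
Lemma side_r (D : DoubleCat) (a : sq D) X : srgt a = vid X -> htgt (stop a) = X /\ htgt (sbot a) = X.
Proof. intro l. rewrite stop_htgt, sbot_htgt, l, vsrc_vid, vtgt_vid. auto. Qed.

Arguments side_l {D a X}. Arguments side_r {D a X}.
Section Main.
Variables (A B : DoubleCat) (F : DoubleFunctor A B).

Definition DF2 := (forall (c : hom A) (beta : sq B), vertically_invertible beta ->
     slft beta = vid (Fob F (hsrc c)) -> srgt beta = vid (Fob F (htgt c)) ->
     sbot beta = Fhom F c ->
     exists alpha : sq A, vertically_invertible alpha /\
       slft alpha = vid (hsrc c) /\ srgt alpha = vid (htgt c) /\ sbot alpha = c /\
       Fsq F alpha = beta).

Definition HF2 := (forall (c : tmor (HTwoCat A)) (beta : tcell (HTwoCat B)), invertible2 beta -> ctgt beta = G1 (HF F) c ->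
     exists alpha : tcell (HTwoCat A), invertible2 alpha /\ ctgt alpha = c /\ G2 (HF F) alpha = beta).

Lemma df2_HF2 : DF2 -> HF2.
Proof.
  intros df2 c beta Hinv Ht.
  pose proof (H_inv_to_vi Hinv) as vi.
  destruct beta as [b [l r]]. simpl in Ht, vi.
  destruct (side_l l) as [_ L]. destruct (side_r r) as [_ R].
  rewrite Ht, F_hsrc in L. rewrite Ht, F_htgt in R.
  pose proof l as l1. pose proof r as r1. rewrite <- L in l1. rewrite <- R in r1.
  destruct (df2 c b vi l1 r1 Ht) as [a [via [la [ra [ba Fa]]]]].
  destruct (side_l la) as [La _]. destruct (side_r ra) as [Ra _].
  assert (P : slft a = vid (hsrc (stop a)) /\ srgt a = vid (htgt (stop a))).
  { rewrite La, Ra. auto. }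
  exists (exist _ a P). split; [|split].
  - apply H_vi_to_inv. exact via.
  - exact ba.
  - apply Hcell_eq. simpl. exact Fa.
Qed.

Lemma HF2_df2 : HF2 -> DF2.
Proof.
  intros hf2 c b vi l r bb.
  destruct (side_l l) as [L _]. destruct (side_r r) as [R _].
  assert (P : slft b = vid (hsrc (stop b)) /\ srgt b = vid (htgt (stop b))).
  { rewrite L, R. auto. }
  destruct (hf2 c (exist _ b P)) as [[aa [pl pr]] [ia [ta Ga]]].
  - apply H_vi_to_inv. exact vi.
  - exact bb.
  - simpl in ta. exists aa. split; [|split; [|split; [|split]]].
    + exact (H_inv_to_vi ia).
    + destruct (side_l pl) as [_ X]. rewrite <- ta, X. exact pl.
    + destruct (side_r pr) as [_ X]. rewrite <- ta, X. exact pr.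
    + exact ta.
    + apply (f_equal (@proj1_sig _ _)) in Ga. exact Ga.
Qed.

End Main.

Lemma V_inv_comp (D : DoubleCat) (beta : VCell D) : @invertible2 (VTwoCat D) beta ->
  vertically_invertible (vc_s0 beta) /\ vertically_invertible (vc_s1 beta).
Proof.
  intros [t [h1 [h2 [e1 e2]]]]. simpl in h1, h2, e1, e2.
  pose proof (f_equal (@vc_s0 D) e1) as a1. pose proof (f_equal (@vc_s0 D) e2) as a2.
  pose proof (f_equal (@vc_s1 D) e1) as b1. pose proof (f_equal (@vc_s1 D) e2) as b2.
  rewrite Vccomp_s0 in a1. rewrite Vccomp_s0 in a2. rewrite Vccomp_s1 in b1. rewrite Vccomp_s1 in b2. simpl in a1, a2, b1, b2.
  split.
  - exists (vc_s0 t). repeat split.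
    + rewrite vc_s0_bot, vc_s0_top, h1. reflexivity.
    + rewrite vc_s0_bot, vc_s0_top, h2. reflexivity.
    + rewrite vc_s0_top. exact a1.
    + rewrite vc_s0_bot. exact a2.
  - exists (vc_s1 t). repeat split.
    + rewrite vc_s1_bot, vc_s1_top, h1. reflexivity.
    + rewrite vc_s1_bot, vc_s1_top, h2. reflexivity.
    + rewrite vc_s1_top. exact b1.
    + rewrite vc_s1_bot. exact b2.
Qed.
Arguments V_inv_comp {D beta}.

Lemma VF_cell_src A B (F : DoubleFunctor A B) s : vc_src (VF_cell F s) = Fsq F (vc_src s).
Proof. destruct s; reflexivity. Qed.
Lemma VF_cell_tgt A B (F : DoubleFunctor A B) s : vc_tgt (VF_cell F s) = Fsq F (vc_tgt s).
Proof. destruct s; reflexivity. Qed.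
Lemma VF_cell_s0 A B (F : DoubleFunctor A B) s : vc_s0 (VF_cell F s) = Fsq F (vc_s0 s).
Proof. destruct s; reflexivity. Qed.
Lemma VF_cell_s1 A B (F : DoubleFunctor A B) s : vc_s1 (VF_cell F s) = Fsq F (vc_s1 s).
Proof. destruct s; reflexivity. Qed.

Section M.
Variables (A B : DoubleCat) (F : DoubleFunctor A B).

Lemma df2_VF2 : DF2 A B F ->
  forall (c : tmor (VTwoCat A)) (beta : tcell (VTwoCat B)), invertible2 beta -> ctgt beta = G1 (VF F) c ->
     exists alpha : tcell (VTwoCat A), invertible2 alpha /\ ctgt alpha = c /\ G2 (VF F) alpha = beta.
Proof.
  intros df2 c beta Hinv Ht. simpl in c, beta, Ht |- *.
  destruct (V_inv_comp Hinv) as [vi0 vi1].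
  assert (L0 : slft (vc_s0 beta) = vid (Fob F (hsrc (stop c)))).
  { destruct (side_l (vc_s0_lft beta)) as [_ X].
    rewrite vc_s0_bot, Ht, F_stop, F_hsrc in X. rewrite X. apply vc_s0_lft. }
  assert (R0 : srgt (vc_s0 beta) = vid (Fob F (htgt (stop c)))).
  { destruct (side_r (vc_s0_rgt beta)) as [_ X].
    rewrite vc_s0_bot, Ht, F_stop, F_htgt in X. rewrite X. apply vc_s0_rgt. }
  assert (B0 : sbot (vc_s0 beta) = Fhom F (stop c)).
  { rewrite vc_s0_bot, Ht, F_stop. reflexivity. }
  assert (L1 : slft (vc_s1 beta) = vid (Fob F (hsrc (sbot c)))).
  { destruct (side_l (vc_s1_lft beta)) as [_ X].
    rewrite vc_s1_bot, Ht, F_sbot, F_hsrc in X. rewrite X. apply vc_s1_lft. }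
  assert (R1 : srgt (vc_s1 beta) = vid (Fob F (htgt (sbot c)))).
  { destruct (side_r (vc_s1_rgt beta)) as [_ X].
    rewrite vc_s1_bot, Ht, F_sbot, F_htgt in X. rewrite X. apply vc_s1_rgt. }
  assert (B1 : sbot (vc_s1 beta) = Fhom F (sbot c)).
  { rewrite vc_s1_bot, Ht, F_sbot. reflexivity. }
  destruct (df2 _ _ vi0 L0 R0 B0) as [a0 [via0 [la0 [ra0 [ba0 Fa0]]]]].
  destruct (df2 _ _ vi1 L1 R1 B1) as [a1 [via1 [la1 [ra1 [ba1 Fa1]]]]].
  destruct via0 as [a0' [p0 [q0 [e0 f0]]]].
  destruct via1 as [a1' [p1 [q1 [e1 f1]]]].
  destruct (side_l la0) as [la0t la0b]. destruct (side_r ra0) as [ra0t ra0b].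
  destruct (side_l la1) as [la1t la1b]. destruct (side_r ra1) as [ra1t ra1b].
  assert (la0' : slft a0 = vid (hsrc (stop a0))) by (rewrite la0t; exact la0).
  assert (ra0' : srgt a0 = vid (htgt (stop a0))) by (rewrite ra0t; exact ra0).
  assert (la1' : slft a1 = vid (hsrc (stop a1))) by (rewrite la1t; exact la1).
  assert (ra1' : srgt a1 = vid (htgt (stop a1))) by (rewrite ra1t; exact ra1).
  destruct (inv_sides p0 q0 e0 la0' ra0') as [la0i ra0i].
  destruct (inv_sides p1 q1 e1 la1' ra1') as [la1i ra1i].
  assert (k1 : sbot c = stop a1') by (rewrite <- ba1; exact p1).
  assert (k0 : sbot a0 = stop (sq_vcomp c a1')) by (rewrite (sq_vcomp_top k1); exact ba0).
  set (a := sq_vcomp a0 (sq_vcomp c a1')).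
  assert (top_a : stop a = stop a0) by (apply (sq_vcomp_top k0)).
  assert (bot_a : sbot a = stop a1).
  { unfold a. rewrite (sq_vcomp_bot k0), (sq_vcomp_bot k1). exact q1. }
  assert (lft_a : slft a = slft c).
  { unfold a. rewrite (sq_vcomp_lft k0), (sq_vcomp_lft k1), la0, la1i, <- p1, ba1.
    rewrite stop_hsrc, sbot_hsrc, vcomp_id_r, vcomp_id_l. reflexivity. }
  assert (rgt_a : srgt a = srgt c).
  { unfold a. rewrite (sq_vcomp_rgt k0), (sq_vcomp_rgt k1), ra0, ra1i, <- p1, ba1.
    rewrite stop_htgt, sbot_htgt, vcomp_id_r, vcomp_id_l. reflexivity. }
  assert (eq_a : sq_vcomp a0 c = sq_vcomp a a1).
  { assert (k2 : sbot (sq_vcomp c a1') = stop a1) by (rewrite (sq_vcomp_bot k1); exact q1).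
    unfold a. rewrite (sq_vcomp_assoc k0 k2), (sq_vcomp_assoc k1 q1), f1, ba1, sq_vcomp_id_r.
    reflexivity. }
  pose (alpha := @Build_VCell A a c a0 a1 lft_a rgt_a (eq_sym top_a) ba0
     ltac:(rewrite top_a; exact la0') ltac:(rewrite top_a; exact ra0')
     (eq_sym bot_a) ba1 ltac:(rewrite bot_a; exact la1') ltac:(rewrite bot_a; exact ra1') eq_a).
  assert (t0 : stop a0' = stop c) by (rewrite <- p0; exact ba0).
  assert (eq_t : sq_vcomp a0' a = sq_vcomp c a1').
  { unfold a. rewrite <- (sq_vcomp_assoc q0 k0), f0, k0, sq_vcomp_id_l. reflexivity. }
  pose (t := @Build_VCell A c a a0' a1' (eq_sym lft_a) (eq_sym rgt_a) t0
     ltac:(rewrite q0; exact (eq_sym top_a))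
     ltac:(rewrite <- t0; exact la0i) ltac:(rewrite <- t0; exact ra0i)
     (eq_sym k1) ltac:(rewrite q1; exact (eq_sym bot_a))
     ltac:(rewrite k1; exact la1i) ltac:(rewrite k1; exact ra1i) eq_t).
  exists alpha. split; [|split].
  - exists t. exists (eq_refl c). exists (eq_refl a). cbn [ccomp cid csrc ctgt VTwoCat]. split; apply VCell_eq.
    + rewrite Vccomp_src. reflexivity.
    + rewrite Vccomp_tgt. reflexivity.
    + rewrite Vccomp_s0. simpl. rewrite e0, top_a. reflexivity.
    + rewrite Vccomp_s1. simpl. rewrite e1, bot_a. reflexivity.
    + rewrite Vccomp_src. reflexivity.
    + rewrite Vccomp_tgt. reflexivity.
    + rewrite Vccomp_s0. simpl. rewrite f0, ba0. reflexivity.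
    + rewrite Vccomp_s1. simpl. rewrite f1, ba1. reflexivity.
  - reflexivity.
  - cbn [G2 VF]. apply VCell_eq.
    + rewrite VF_cell_src. simpl. unfold a.
      rewrite (F_sq_vcomp F k0), (F_sq_vcomp F k1), Fa0, <- Ht.
      assert (m1 : sbot (vc_s0 beta) = stop (vc_tgt beta)) by apply vc_s0_bot.
      assert (m2 : sbot (vc_tgt beta) = stop (Fsq F a1')).
      { rewrite Ht, F_sbot, F_stop, k1. reflexivity. }
      rewrite <- (sq_vcomp_assoc m1 m2), vc_eq.
      assert (m3 : sbot (vc_src beta) = stop (vc_s1 beta)) by (symmetry; apply vc_s1_top).
      assert (m4 : sbot (vc_s1 beta) = stop (Fsq F a1')).
      { rewrite <- Fa1, F_sbot, F_stop, p1. reflexivity. }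
      rewrite (sq_vcomp_assoc m3 m4), <- Fa1, <- (F_sq_vcomp F p1), e1, F_sq_vid, <- F_stop, Fa1,
        vc_s1_top, sq_vcomp_id_r. reflexivity.
    + rewrite VF_cell_tgt. simpl. symmetry. exact Ht.
    + rewrite VF_cell_s0. exact Fa0.
    + rewrite VF_cell_s1. exact Fa1.
Qed.
End M.

Theorem proposition3p13 (A B : DoubleCat) (F : DoubleFunctor A B) :
  double_fibration F <-> lack_fibration (HF F) /\ lack_fibration (VF F).
Proof.
  split.
  - intros [df1 [df2 df3]]. split; split.
    + exact df1.
    + apply df2_HF2. exact df2.
    + intros b C hb e. exact (df3 C b hb e).
    + apply df2_VF2. exact df2.
  - intros [[h1 h2] [v1 v2]]. split; [exact h1 | split].
    + apply HF2_df2. exact h2.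
    + intros u b hb e. exact (v1 b u hb e).
Qed.
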